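(* Let $s\ge1$ and let $\mathcal{G}_{2s}\subset GL_{2s}(\mathbb{Z})$ be the group generated by the linear maps $\sigma_1,\dotsc,\sigma_{2s}$ of $\mathbb{Z}^{2s}$ given in coordinates $k=(k_1,\dotsc,k_{2s})$ by \[ \sigma_1:\ k_1\mapsto k_1,\quad k_j\mapsto k_j+k_1\ (j>1); \] \[ \sigma_i\ (2\le i\le 2s):\ k_{i-1}\mapsto 2k_{i-1}-k_i,\quad k_i\mapsto k_{i-1},\quad k_j\mapsto k_j\ (j\ne i-1,i). \] For nonzero $k\in\mathbb{Z}^{2s}$ put $\gamma(k)=\gcd(k_1,\dotsc,k_{2s})$, $\alpha(k)=\#\{i:\ k_i/\gamma(k)\equiv1\pmod2\}$ and $\delta(k)=|2\alpha(k)-2s-1|$. Then the map $k\mapsto(\gamma(k),\delta(k))$ induces a bijection between the set of orbits of $\mathcal{G}_{2s}$ on $\mathbb{Z}^{2s}\setminus\{0\}$ and the set of pairs $(\gamma,\delta)$ with $\gamma\in\mathbb{Z}_{>0}$ and $\delta\in\{1,3,5,\dotsc,2s-1\}$. *)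

(* Defs.v *)
From mathcomp Require Import all_boot all_order all_algebra.
Set Implicit Arguments. Unset Strict Implicit. Unset Printing Implicit Defensive.
Import Order.TTheory GRing.Theory Num.Theory.
Local Open Scope ring_scope.

(* Vectors of Z^n are column vectors 'cV[int]_n; coordinates are 0-based:
   coordinate k_j (paper) is entry j-1.  The generator sigma_i (paper, 1<=i<=n)
   is [sigma (i-1)] here. *)
Definition sigma (n : nat) (i : 'I_n) : 'M[int]_n :=
  \matrix_(a < n, b < n)
    if (i : nat) == 0%N then
      (if (a : nat) == 0%N then (b == a)%:R else (b == a)%:R + ((b : nat) == 0%N)%:R)
    else if (a : nat) == i.-1 then
      2 * ((b : nat) == i.-1)%:R - (b == i)%:R
    else if a == i then ((b : nat) == i.-1)%:R
    else (b == a)%:R.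

Inductive inG (n : nat) : 'M[int]_n -> Prop :=
  | inG_one : inG 1%:M
  | inG_gen : forall i, inG (sigma i)
  | inG_inv : forall i, inG (invmx (sigma i))
  | inG_mul : forall g h, inG g -> inG h -> inG (g *m h).

Definition same_orbit (n : nat) (k k' : 'cV[int]_n) : Prop :=
  exists2 g, @inG n g & k' = g *m k.

Definition gammaK (n : nat) (k : 'cV[int]_n) : int :=
  \big[gcdz/0]_(j < n) k j ord0.

Definition alphaK (n : nat) (k : 'cV[int]_n) : nat :=
  #|[set j : 'I_n | modz (divz (k j ord0) (gammaK k)) 2 == 1]|.

Definition deltaK (n : nat) (k : 'cV[int]_n) : nat :=
  `|((2 * alphaK k)%:Z - (n.+1)%:Z)|%N.

(* Main.v *)
Require Import Defs.
From mathcomp Require Import all_boot all_order all_algebra.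
From mathcomp Require Import zify ring.
From Stdlib Require Import FunctionalExtensionality Classical.
Import Order.TTheory GRing.Theory Num.Theory.
Local Open Scope ring_scope.
Set Implicit Arguments. Unset Strict Implicit. Unset Printing Implicit Defensive.

Definition vec := nat -> int.

Definition tau (L i : nat) (t : int) (e : vec) : vec :=
  fun j => if j.+1 == i then e j - t * e i
           else if (j == i.+1) && (j < L)%N then e j + t * e i
           else e j.

Lemma tau_i L i t e : tau L i t e i = e i.
Proof. rewrite /tau; case: ifP; first lia. case: ifP => //; lia. Qed.

Lemma tau_add L i a b e : tau L i a (tau L i b e) = tau L i (a + b) e.
Proof.
apply: functional_extensionality => j; move: (tau_i L i b e); rewrite /tau => ->.
case: (j.+1 == i); first ring. case: (_ && _); first ring. done.
Qed.

Lemma tau0 L i e : tau L i 0 e = e.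
Proof.
apply: functional_extensionality => j; rewrite /tau.
case: (j.+1 == i); first ring. case: (_ && _); first ring. done.
Qed.

Lemma tauK L i t e : tau L i (- t) (tau L i t e) = e.
Proof. by rewrite tau_add addNr tau0. Qed.

Inductive reach (L : nat) : vec -> vec -> Prop :=
| rrefl e : reach L e e
| rstep e i t e' : (i < L)%N -> reach L (tau L i t e) e' -> reach L e e'.

Lemma reach_trans L a b c : reach L a b -> reach L b c -> reach L a c.
Proof.
elim=> [//|e i t e' hi _ IH] h; apply: rstep hi _; exact: IH.
Qed.

Lemma reach1 L i t e : (i < L)%N -> reach L e (tau L i t e).
Proof. by move=> hi; apply: rstep hi (rrefl _ _). Qed.

Lemma reach_sym L a b : reach L a b -> reach L b a.
Proof.
elim=> [e|e i t e' hi _ IH]; first exact: rrefl.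
apply: reach_trans IH _. by rewrite -{2}(tauK L i t e); apply: reach1.
Qed.

Definition supp (L : nat) (e : vec) := forall j, (L <= j)%N -> e j = 0.

Lemma tau_supp L i t e : (i < L)%N -> supp L e -> supp L (tau L i t e).
Proof.
move=> hi hs j hj; rewrite /tau.
case: ifP => h; first lia. case: ifP => h2; first lia. exact: hs.
Qed.

Lemma reach_supp L a b : reach L a b -> supp L a -> supp L b.
Proof. elim=> // e i t e' hi _ IH hs; apply: IH; exact: tau_supp. Qed.

Definition dv (L : nat) (d : int) (e : vec) := forall j, (j < L)%N -> (d %| e j)%Z.

Lemma dvD d x y : (d %| x)%Z -> (d %| y)%Z -> (d %| x + y)%Z.
Proof. move=> /dvdzP [a ->] /dvdzP [b ->]; apply/dvdzP; exists (a + b); ring. Qed.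

Lemma dvN d x : (d %| x)%Z -> (d %| - x)%Z.
Proof. move=> /dvdzP [a ->]; apply/dvdzP; exists (- a); ring. Qed.

Lemma dvM d x y : (d %| y)%Z -> (d %| x * y)%Z.
Proof. exact: dvdz_mull. Qed.

Lemma tau_dv L i t e d : (i < L)%N -> dv L d e -> dv L d (tau L i t e).
Proof.
move=> hi hd j hj; rewrite /tau.
case: ifP => h. apply: dvD; first exact: hd. apply: dvN; apply: dvM; exact: hd.
case: ifP => h2. apply: dvD; first exact: hd. apply: dvM; exact: hd.
exact: hd.
Qed.

Lemma reach_dv L a b d : reach L a b -> dv L d a -> dv L d b.
Proof. elim=> // e i t e' hi _ IH hd; apply: IH; exact: tau_dv. Qed.

Definition prim (L : nat) (e : vec) := forall d, dv L d e -> (d %| 1)%Z.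

Lemma reach_prim L a b : reach L a b -> prim L a -> prim L b.
Proof. move=> r hp d hd; apply: hp; apply: reach_dv hd; exact: reach_sym. Qed.

Definition sc (c : int) (e : vec) : vec := fun j => c * e j.

Lemma tau_sc L i t c e : tau L i t (sc c e) = sc c (tau L i t e).
Proof.
apply: functional_extensionality => j; rewrite /tau /sc.
case: (j.+1 == i); first ring. case: (_ && _); first ring. done.
Qed.

Lemma reach_sc L c a b : reach L a b -> reach L (sc c a) (sc c b).
Proof.
elim=> [e|e i t e' hi _ IH]; first exact: rrefl.
apply: (@rstep L _ i t _ hi); by rewrite tau_sc.
Qed.

Definition bi (b : bool) : int := if b then 1 else 0.
Definition Sm (a : nat) (e : vec) : int := \sum_(k < a.+1) e k.

Ltac splitif := repeat match goal with |- context [if ?b then _ else _] => case: (boolP b) => ? end.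

Lemma SS a e : Sm a.+1 e = Sm a e + e a.+1.
Proof. by rewrite /Sm big_ord_recr. Qed.
Lemma S0 e : Sm 0 e = e 0%N.
Proof. by rewrite /Sm big_ord1. Qed.

Lemma S_tau L i t e a : (a < L)%N ->
  Sm a (tau L i t e) = Sm a e + t * e i * (bi (i < a)%N - bi ((0 < i)%N && (i <= a.+1)%N)).
Proof.
elim: a => [|a IH] ha.
  rewrite !S0 /tau /bi; splitif; lia.
rewrite !SS IH; last lia.
rewrite /tau /bi; splitif; lia.
Qed.

Definition par (x : int) : bool := modz x 2 == 1.

Lemma par_cases x : modz x 2 = 0 \/ modz x 2 = 1.
Proof. lia. Qed.

Lemma parD x y : par (x + y) = par x (+) par y.
Proof.
rewrite /par; case: (par_cases x) => hx; case: (par_cases y) => hy.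
- have -> : modz (x + y) 2 = 0 by lia. by rewrite hx hy.
- have -> : modz (x + y) 2 = 1 by lia. by rewrite hx hy.
- have -> : modz (x + y) 2 = 1 by lia. by rewrite hx hy.
- have -> : modz (x + y) 2 = 0 by lia. by rewrite hx hy.
Qed.

Lemma parN x : par (- x) = par x.
Proof.
rewrite /par; case: (par_cases x) => hx.
- have -> : modz (- x) 2 = 0 by lia. by rewrite hx.
- have -> : modz (- x) 2 = 1 by lia. by rewrite hx.
Qed.

Lemma parM x y : par (x * y) = par x && par y.
Proof.
rewrite /par; case: (par_cases x) => hx; case: (par_cases y) => hy.
- have -> : modz (x * y) 2 = 0. rewrite -modzMm hx hy //. by rewrite hx hy.
- have -> : modz (x * y) 2 = 0. rewrite -modzMm hx hy //. by rewrite hx hy.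
- have -> : modz (x * y) 2 = 0. rewrite -modzMm hx hy //. by rewrite hx hy.
- have -> : modz (x * y) 2 = 1. rewrite -modzMm hx hy //. by rewrite hx hy.
Qed.

Lemma par_bi b : par (bi b) = b.
Proof. by case: b. Qed.

Definition sgb (b : bool) : int := if b then 1 else -1.
Definition psi (L : nat) (e : vec) : int := \sum_(a < L) sgb (par (Sm a e)).
Definition deltaE (L : nat) (e : vec) : nat := `|psi L e - 1|%N.

Lemma sum_if n c (F : nat -> int) : (c < n)%N ->
  \sum_(a < n) (if (a : nat) == c then F a else 0) = F c.
Proof.
move=> hc; rewrite (bigD1 (Ordinal hc)) //= eqxx big1 ?addr0 // => j hj.
rewrite ifF //; apply/negbTE; apply: contra hj => /eqP hj.
by apply/eqP; apply: val_inj.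
Qed.



Lemma par_S_tau L i t e a : (a < L)%N ->
  par (Sm a (tau L i t e)) =
  par (Sm a e) (+) (par (t * e i) && ((i < a)%N (+) ((0 < i)%N && (i <= a.+1)%N))).
Proof. by move=> ha; rewrite S_tau // parD parM (parD (bi _)) parN !par_bi. Qed.

Lemma sgbN b : sgb (~~ b) = - sgb b.
Proof. by case: b; rewrite /sgb ?opprK. Qed.

Lemma sum_ifc n c (v : int) : (c < n)%N ->
  \sum_(a < n) (if (a : nat) == c then v else 0) = v.
Proof. by move=> hc; rewrite (sum_if (fun _ => v)). Qed.

Lemma sgb_xor p c : sgb (p (+) c) - sgb p = if c then -2 * sgb p else 0.
Proof. by case: p; case: c; rewrite /sgb /=. Qed.

Lemma cond_eq i a : ((i.+1 < a)%N (+) (i.+1 <= a.+1)%N) = ((a == i) || (a == i.+1)).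
Proof.
case h1: (i.+1 < a)%N; case h2: (i.+1 <= a.+1)%N; case h3: (a == i); case h4: (a == i.+1) => //=; lia.
Qed.

Lemma psi_tau L i t e : (i < L)%N -> deltaE L (tau L i t e) = deltaE L e.
Proof.
move=> hi; rewrite /deltaE /psi.
case ht: (par (t * e i)).
2:{ congr (`| _ - 1|%N); apply: eq_bigr => a _.
    by rewrite par_S_tau // ht andFb addbF. }
case: i hi ht => [|i] hi ht.
  case: L hi => [//|L] _.
  rewrite !big_ord_recl.
  have h0 : par (Sm (@ord0 L) (tau L.+1 0 t e)) = par (Sm (@ord0 L) e).
    by rewrite par_S_tau //= andbF addbF.
  have he0 : par (Sm (@ord0 L) e) by rewrite /= S0; move: ht; rewrite parM => /andP [].
  rewrite h0 he0.
  have -> : \sum_(j < L) sgb (par (Sm (lift ord0 j) (tau L.+1 0 t e))) =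
            - \sum_(j < L) sgb (par (Sm (lift ord0 j) e)).
    rewrite -sumrN; apply: eq_bigr => a _.
    rewrite par_S_tau; last by rewrite /= /bump /=; case: a => a /= ha; lia.
    by rewrite ht /= addbT sgbN.
  have -> : (sgb true + - \sum_(j < L) sgb (par (Sm (lift ord0 j) e)) - 1) =
            - (sgb true + \sum_(j < L) sgb (par (Sm (lift ord0 j) e)) - 1) by rewrite /sgb; ring.
  by rewrite abszN.
have hei : par (e i.+1) by move: ht; rewrite parM => /andP [].
have hpi : par (Sm i.+1 e) = ~~ par (Sm i e) by rewrite SS parD hei addbT.
congr (`| _ - 1|%N).
apply/eqP; rewrite -subr_eq0; apply/eqP.
rewrite -sumrB.
rewrite (eq_bigr (fun a : 'I_L => (if (a : nat) == i then - 2 * sgb (par (Sm i e)) else 0)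
   + (if (a : nat) == i.+1 then - 2 * sgb (par (Sm i.+1 e)) else 0))); last first.
  move=> a _; rewrite par_S_tau // ht andTb (_ : (0 < i.+1)%N = true) // andTb cond_eq.
  rewrite sgb_xor; have [->|hai] := eqVneq (a : nat) i.
    by rewrite /=; splitif; try lia; ring.
  have [->|hai2] := eqVneq (a : nat) i.+1.
    by rewrite /=; splitif; try lia; ring.
  by rewrite /=; splitif; try lia; ring.
rewrite big_split /= !sum_ifc //; last lia.
by rewrite hpi sgbN; ring.
Qed.


Lemma reach_delta L a b : reach L a b -> deltaE L b = deltaE L a.
Proof. elim=> // e i t e' hi _ IH; by rewrite IH psi_tau. Qed.

Definition eqm2 L (e e' : vec) := forall j, (j < L)%N -> par (e j) = par (e' j).

Lemma par_Sm_eq L e e' a : eqm2 L e e' -> (a < L)%N -> par (Sm a e) = par (Sm a e').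
Proof.
move=> h; elim: a => [|a IH] ha; first by rewrite !S0 h.
rewrite !SS !parD IH ?h //; lia.
Qed.

Lemma delta_m2 L e e' : eqm2 L e e' -> deltaE L e = deltaE L e'.
Proof.
move=> h; rewrite /deltaE /psi; congr (`|_ - 1|%N); apply: eq_bigr => a _.
by rewrite (par_Sm_eq h).
Qed.

Lemma delta_ext L e e' : (forall j, (j < L)%N -> e j = e' j) -> deltaE L e = deltaE L e'.
Proof. move=> h; apply: delta_m2 => j hj; by rewrite h. Qed.

Definition eps (a : nat) : vec := fun j => if j == a then 1 else 0.
Definition vadd (e f : vec) : vec := fun j => e j + f j.

Lemma Sm_eps a j : Sm a (eps j) = bi (j <= a)%N.
Proof. elim: a => [|a IH]; rewrite ?S0 ?SS ?IH /eps /bi; splitif; lia. Qed.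

Lemma Sm_add a e f : Sm a (vadd e f) = Sm a e + Sm a f.
Proof. by rewrite /Sm /vadd big_split. Qed.

Lemma sum_sgb n a b : (a <= b)%N ->
  \sum_(j < n) sgb ((a <= j)%N && (j < b)%N) = 2 * Posz (minn b n - minn a n)%N - n%:Z.
Proof.
move=> hab; elim: n => [|n IH]; first by rewrite big_ord0; lia.
rewrite big_ord_recr /= IH /sgb; splitif; lia.
Qed.

Lemma psi_eps L j : (j <= L)%N -> psi L (eps j) = L%:Z - 2 * j%:Z.
Proof.
move=> hj; rewrite /psi.
rewrite (eq_bigr (fun a : 'I_L => sgb ((j <= a)%N && (a < L)%N))); last first.
  by move=> a _; rewrite Sm_eps par_bi ltn_ord andbT.
rewrite sum_sgb //; lia.
Qed.

Lemma psi_eps2 L j k : (j < k)%N -> (k <= L)%N -> psi L (vadd (eps j) (eps k)) = 2 * Posz (k - j)%N - L%:Z.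
Proof.
move=> hjk hk; rewrite /psi.
rewrite (eq_bigr (fun a : 'I_L => sgb ((j <= a)%N && (a < k)%N))); last first.
  move=> a _; rewrite Sm_add !Sm_eps parD !par_bi; congr sgb.
  case h1: (j <= a)%N; case h2: (k <= a)%N; case h3: (a < k)%N => //=; lia.
rewrite sum_sgb; [lia|lia].
Qed.

Lemma delta_eps L j : (j < L)%N -> deltaE L (eps j) = absz ((L%:Z - 2 * j%:Z - 1)%R).
Proof. by move=> hj; rewrite /deltaE psi_eps //; apply: ltnW. Qed.

Lemma delta_eps2 L j k : (j < k)%N -> (k <= L)%N ->
  deltaE L (vadd (eps j) (eps k)) = absz ((2 * Posz (k - j)%N - L%:Z - 1)%R).
Proof. by move=> h1 h2; rewrite /deltaE psi_eps2. Qed.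

Definition c (L m : nat) : vec := fun j => (if m == 1%N then 0 else eps m.-2 j) + eps L.-1 j.

Lemma delta_c L m : (1 <= m)%N -> (m.*2 <= L)%N -> deltaE L (c L m) = (L.+1 - m.*2)%N.
Proof.
move=> h1 h2.
have [->|hm] := eqVneq m 1%N.
  have -> : c L 1 = eps L.-1 by apply: functional_extensionality => j; rewrite /c /= add0r.
  rewrite delta_eps; lia.
have -> : c L m = vadd (eps m.-2) (eps L.-1).
  by apply: functional_extensionality => j; rewrite /c /vadd (negbTE hm).
rewrite delta_eps2; lia.
Qed.

Lemma prim_unit L f j : (j < L)%N -> f j * f j = 1 -> prim L f.
Proof.
move=> hj hf d hd; have := dvdz_mulr (f j) (hd j hj); by rewrite hf.
Qed.

Lemma supp_eps L j : (j < L)%N -> supp L (eps j).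
Proof. move=> hj k hk; rewrite /eps ifF //; lia. Qed.


Arguments reach1 L i t e _.

Definition join (P : nat) (q : vec) (a u : int) : vec :=
  fun j => if (j < P)%N then q j else if j == P then a else if j == P.+1 then u else 0.

Lemma join_ext P q q' a u : (forall j, (j < P)%N -> q j = q' j) -> join P q a u = join P q' a u.
Proof. move=> h; apply: functional_extensionality => j; rewrite /join; case: ifP => // hj; exact: h. Qed.

Lemma unit_cases (u : int) : u * u = 1 -> u = 1 \/ u = -1.
Proof.
move=> h; have : (u - 1) * (u + 1) = 0 by rewrite mulrDr !mulrBl h; ring.
by move/eqP; rewrite mulf_eq0 subr_eq0 addr_eq0 => /orP [/eqP ->|/eqP ->]; [left|right].
Qed.

Lemma kill P q a u : u * u = 1 -> reach P.+2 (join P q a u) (join P q 0 u).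
Proof.
move=> hu.
have -> : join P q 0 u = tau P.+2 P.+1 (a * u) (join P q a u).
  apply: functional_extensionality => j; rewrite /tau /join.
  splitif; try lia; try ring.
  by rewrite -mulrA hu mulr1 subrr.
apply: reach1; lia.
Qed.

Lemma inv P q u : (0 < P)%N -> u * u = 1 ->
  reach P.+2 (join P q 0 u) (join P (fun j => q j + (if j == P.-1 then 2 * u else 0)) 0 (- u)).
Proof.
move=> hP hu.
have e1 : tau P.+2 P.+1 (-1) (join P q 0 u) = join P q u u.
  apply: functional_extensionality => j; rewrite /tau /join.
  splitif; try lia; ring.
have e2 : tau P.+2 P (-2) (join P q u u) =
          join P (fun j => q j + (if j == P.-1 then 2 * u else 0)) u (- u).
  apply: functional_extensionality => j; rewrite /tau /join.
  splitif; try lia; ring.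
apply: (@rstep _ _ P.+1 (-1)); first lia.
rewrite e1; apply: (@rstep _ _ P (-2)); first lia.
rewrite e2; apply: kill; by rewrite mulrNN.
Qed.

Lemma lift P p p' u : u * u = 1 -> reach P p p' -> reach P.+2 (join P p 0 u) (join P p' 0 u).
Proof.
move=> hu; elim=> [e|e i t e' hi _ IH]; first exact: rrefl.
have e1 : tau P.+2 i t (join P e 0 u) = join P (tau P i t e) (if i.+1 == P then t * e i else 0) u.
  apply: functional_extensionality => j; rewrite /tau /join.
  splitif; try lia; try ring.
apply: (@rstep _ _ i t); first lia.
rewrite e1; apply: reach_trans (kill _ _ _ hu) IH.
Qed.

Definition Dp (a : nat) (x : int) : vec := fun j => if (j == a) || (j == a.+1) then x else 0.
Definition Ap (a : nat) (x : int) : vec := fun j => if j == a then x else if j == a.+1 then - x else 0.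

Lemma Dp_left L k x : (k.+1 < L)%N -> reach L (Dp k x) (Dp 0 x).
Proof.
elim: k => [|k IH] hk; first exact: rrefl.
apply: (@rstep _ _ k.+1 (-1)); first lia.
have -> : tau L k.+1 (-1) (Dp k.+1 x) = Dp k x.
  apply: functional_extensionality => j; rewrite /tau /Dp.
  splitif; try lia; ring.
apply: IH; lia.
Qed.

Lemma Ap_right L k : (k.+1 < L)%N -> reach L (Ap 0 1) (Ap k ((-1) ^+ k)).
Proof.
elim: k => [|k IH] hk; first by rewrite expr0; exact: rrefl.
apply: reach_trans (IH _) _; first lia.
have -> : Ap k.+1 ((-1) ^+ k.+1) = tau L k.+1 (-1) (Ap k ((-1) ^+ k)).
  apply: functional_extensionality => j; rewrite /tau /Ap exprS.
  splitif; try lia; ring.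
apply: reach1; lia.
Qed.

Lemma sign_flip L : (1 < L)%N -> ~~ odd L -> reach L (eps L.-1) (sc (-1) (eps L.-1)).
Proof.
move=> hL hev.
apply: (@rstep _ _ L.-1 (-1)); first lia.
have -> : tau L L.-1 (-1) (eps L.-1) = Dp L.-2 1.
  apply: functional_extensionality => j; rewrite /tau /Dp /eps.
  splitif; try lia; ring.
apply: reach_trans (Dp_left _ _) _; first lia.
apply: (@rstep _ _ 0 (-1)); first lia.
apply: (@rstep _ _ 0 (-1)); first lia.
have -> : tau L 0 (-1) (tau L 0 (-1) (Dp 0 1)) = Ap 0 1.
  apply: functional_extensionality => j; rewrite /tau /Dp /Ap.
  splitif; try lia; ring.
apply: reach_trans (Ap_right (k := L.-2) _) _; first lia.
have -> : (-1) ^+ L.-2 = 1 :> int.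
  rewrite -signr_odd; have -> : odd L.-2 = false.
    by move: hev; case: L hL => [//|[//|L]] _ /=; case: (odd L).
  by [].
apply: (@rstep _ _ L.-1 (-1)); first lia.
have -> : tau L L.-1 (-1) (Ap L.-2 1) = sc (-1) (eps L.-1).
  apply: functional_extensionality => j; rewrite /tau /Ap /sc /eps.
  splitif; try lia; ring.
exact: rrefl.
Qed.


Lemma tau_prev L i t e : (0 < i)%N -> tau L i t e i.-1 = e i.-1 - t * e i.
Proof. move=> hi; rewrite /tau ifT //; lia. Qed.

Lemma tau_next L i t e : (i.+1 < L)%N -> tau L i t e i.+1 = e i.+1 + t * e i.
Proof. move=> hi; rewrite /tau ifF; last lia. rewrite ifT //; lia. Qed.

Lemma tau_other L i t e j : j.+1 != i -> j != i.+1 -> tau L i t e j = e j.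
Proof. move=> h1 h2; rewrite /tau (negbTE h1) (negbTE h2) //. Qed.

Lemma Q L : (1 < L)%N -> forall d e, (d <= L.-2)%N -> ~~ (e L.-1 %| e (L.-2 - d)%N)%Z ->
  exists e', reach L e e' /\ e' L.-1 != 0 /\ (e L.-1 != 0 -> (absz (e' L.-1) < absz (e L.-1))%N).
Proof.
move=> hL; elim=> [|d IH] e hd hnd.
  rewrite subn0 in hnd.
  have hL1 : L.-1 = (L.-2).+1 by lia.
  have [hb|hb] := eqVneq (e L.-1) 0.
    exists (tau L L.-2 1 e); split; first by apply: reach1; lia.
    rewrite hL1 tau_next; last lia. rewrite -hL1 hb add0r mul1r; split => //.
    by apply: contra hnd => /eqP ->; rewrite dvdz0.
  set a := e L.-2 in hnd *; set b := e L.-1 in hnd hb *.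
  set e1 := tau L L.-1 (divz a b) e.
  have he1a : e1 L.-2 = a - divz a b * b.
    rewrite /e1 tau_prev //; lia.
  have he1b : e1 L.-1 = b by rewrite /e1 tau_i.
  set r := e1 L.-2 in he1a.
  exists (tau L L.-2 (- divz (b - 1) r) e1); split.
    apply: (@rstep _ _ L.-1 (divz a b)); first lia. apply: (@rstep _ _ L.-2 (- divz (b - 1) r)); first lia. exact: rrefl.
  rewrite hL1 tau_next; last lia. rewrite -hL1 he1b.
  have hr : r != 0 by rewrite he1a; apply: contra hnd => /eqP h; lia.
  split; last move=> _; lia.
set p := (L.-2 - d.+1)%N.
have hp1 : (L.-2 - d)%N = p.+1 by rewrite /p; lia.
case hdv: (e L.-1 %| e (L.-2 - d)%N)%Z; last first.
  apply: IH; [lia | by rewrite hdv].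
set e1 := tau L p 1 e.
have he1L : e1 L.-1 = e L.-1 by rewrite /e1 tau_other //; lia.
have he1p : e1 (L.-2 - d)%N = e (L.-2 - d)%N + e p.
  by rewrite hp1 /e1 tau_next ?mul1r //; lia.
have [e' [r1 [h1 h2]]] : exists e', reach L e1 e' /\ e' L.-1 != 0 /\
    (e1 L.-1 != 0 -> (absz (e' L.-1) < absz (e1 L.-1))%N).
  apply: IH; first lia.
  rewrite he1L he1p; apply: contra hnd => h.
  by have := dvD (dvN hdv) h; rewrite addKr.
exists e'; split; first by apply: rstep r1; lia.
by rewrite -he1L.
Qed.

Lemma find_nd L e : (1 < L)%N -> prim L e -> e L.-1 * e L.-1 != 1 ->
  exists d, (d <= L.-2)%N /\ ~~ (e L.-1 %| e (L.-2 - d)%N)%Z.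
Proof.
move=> hL hp h1; apply: NNPP => hne.
have hall : dv L (e L.-1) e.
  move=> j hj; have [->|hjn] := eqVneq j L.-1; first exact: dvdzz.
  apply: NNPP => hn; apply: hne; exists (L.-2 - j)%N; split; first lia.
  rewrite (_ : (L.-2 - (L.-2 - j))%N = j); last lia. by apply/negP.
move: (hp _ hall); rewrite dvdz1 => h.
have : e L.-1 = 1 \/ e L.-1 = -1 by lia.
by case=> h2; move: h1; rewrite h2.
Qed.

Lemma phase1 L e : (1 < L)%N -> prim L e -> exists e', reach L e e' /\ e' L.-1 * e' L.-1 = 1.
Proof.
move=> hL.
have main : forall n e, (absz (e L.-1) <= n)%N -> e L.-1 != 0 -> prim L e ->
    exists e', reach L e e' /\ e' L.-1 * e' L.-1 = 1.
  elim=> [|n IH] e0 hn hb hp; first lia.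
  case h1: (e0 L.-1 * e0 L.-1 == 1); first by exists e0; split; [exact: rrefl | apply/eqP].
  have [d [hd hnd]] := find_nd hL hp (negbT h1).
  have [e' [r [h2 h3]]] := Q hL hd hnd.
  have [e'' [r' h4]] : exists e'', reach L e' e'' /\ e'' L.-1 * e'' L.-1 = 1.
    apply: IH h2 (reach_prim r hp). have := h3 hb; lia.
  by exists e''; split => //; apply: reach_trans r r'.
move=> hp.
have [hb|hb] := eqVneq (e L.-1) 0; last by apply: (main (absz (e L.-1))).
have h1 : e L.-1 * e L.-1 != 1 by rewrite hb mul0r.
have [d [hd hnd]] := find_nd hL hp h1.
have [e' [r [h2 _]]] := Q hL hd hnd.
have [e'' [r' h4]] := main (absz (e' L.-1)) e' (leqnn _) h2 (reach_prim r hp).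
by exists e''; split => //; apply: reach_trans r r'.
Qed.


Lemma bgcdE n (F : 'I_n -> int) :
  \big[gcdz/0]_(i < n) F i = Posz (\big[gcdn/0]_(i < n) `|F i|%N).
Proof.
elim: n F => [|n IH] F; first by rewrite !big_ord0.
by rewrite !big_ord_recl IH.
Qed.

Lemma bgcd_dvd n (F : 'I_n -> int) j : (\big[gcdz/0]_(i < n) F i %| F j)%Z.
Proof. by rewrite bgcdE dvdzE absz_nat (biggcdn_inf j). Qed.

Lemma dvd_bgcd n (F : 'I_n -> int) d : (forall j, (d %| F j)%Z) -> (d %| \big[gcdz/0]_(i < n) F i)%Z.
Proof.
move=> h; apply: (big_ind (fun x => (d %| x)%Z)) => //.
by move=> x y hx hy; rewrite dvdz_gcd hx hy.
Qed.

Lemma bgcd_ge0 n (F : 'I_n -> int) : 0 <= \big[gcdz/0]_(i < n) F i.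
Proof. by rewrite bgcdE. Qed.

Definition R (L : nat) := forall e, supp L e -> prim L e ->
  exists m, (1 <= m)%N /\ (m.*2 <= L)%N /\ reach L e (c L m).
Definition Pd (L : nat) := forall q r, supp L q -> supp L r -> prim L q -> prim L r ->
  deltaE L q = deltaE L r -> reach L q r.

Lemma R_to_P L : R L -> Pd L.
Proof.
move=> hR q r sq sr pq pr hd.
have [m1 [h1 [h2 r1]]] := hR q sq pq.
have [m2 [h3 [h4 r2]]] := hR r sr pr.
have d1 := reach_delta r1; have d2 := reach_delta r2.
rewrite delta_c // in d1; rewrite delta_c // in d2.
have hm : m1 = m2 by lia.
subst m2; apply: reach_trans r1 _; exact: reach_sym.
Qed.

Lemma c_unit P m : (1 <= m)%N -> (m.*2 <= P)%N -> c P m P.-1 = 1.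
Proof. move=> h1 h2; rewrite /c /eps; splitif; lia. Qed.

Lemma c_supp P m : (1 <= m)%N -> (m.*2 <= P)%N -> supp P (c P m).
Proof. move=> h1 h2 j hj; rewrite /c /eps; splitif; lia. Qed.

Lemma lemF P q v j0 : (0 < P)%N -> Pd P -> supp P q -> prim P q ->
  deltaE P q = deltaE P (eps j0) -> (j0 < P.-1)%N -> v * v = 1 ->
  reach P.+2 (join P q 0 v) (join P (eps j0) 0 1).
Proof.
move=> hP hPd sq pq hd hj0 hv.
have sE : supp P (eps j0) by apply: supp_eps; lia.
have pE : prim P (eps j0) by apply: (@prim_unit _ _ j0); [lia | rewrite /eps eqxx mulr1].
have r1 := lift hv (hPd _ _ sq sE pq pE hd).
apply: reach_trans r1 _.
case: (unit_cases hv) => ->; first exact: rrefl.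
apply: reach_trans (@inv P (eps j0) (-1) hP _) _; first by rewrite mulrNN mulr1.
set q2 := fun j => _.
rewrite opprK; apply: lift => //.
apply: hPd => //.
- move=> j hj; rewrite /q2 /eps; splitif; lia.
- by apply: (@prim_unit _ _ j0); [lia | rewrite /q2 /eps; splitif; lia].
- apply: delta_m2 => j hj; rewrite /q2 parD; splitif => //; by rewrite addbF.
Qed.

Lemma par_unit (v : int) : v * v = 1 -> par v.
Proof. by move=> h; case: (unit_cases h) => ->. Qed.

Lemma lemE P : (0 < P)%N -> Pd P -> forall m q v, supp P q -> prim P q ->
  deltaE P q = (P.+1 - m.*2)%N -> (1 <= m)%N -> (m.*2 <= P)%N -> v * v = 1 ->
  exists w, w * w = 1 /\ reach P.+2 (join P (sc 2 q) 0 v) (join P (fun _ => 0) 0 w).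
Proof.
move=> hP hPd; elim=> [|m IH] q v sq pq hd h1 h2 hv; first lia.
have pv := par_unit hv.
have [hm0|hm0] := eqVneq m 0%N.
  subst m. set r := sc (-v) (eps P.-1).
  have sr : supp P r by move=> j hj; rewrite /r /sc /eps; splitif; [lia|ring].
  have pr : prim P r.
    apply: (@prim_unit _ _ P.-1); first lia.
    by rewrite /r /sc /eps eqxx mulr1 mulrNN.
  have hdr : deltaE P q = deltaE P r.
    rewrite hd (@delta_m2 _ r (eps P.-1)); last first.
      by move=> j hj; rewrite /r /sc parM parN pv.
    rewrite delta_eps; lia.
  have r1 := lift hv (reach_sc 2 (hPd _ _ sq sr pq pr hdr)).
  exists (-v); split; first by rewrite mulrNN.
  apply: reach_trans r1 _.
  apply: reach_trans (@inv P (sc 2 r) v hP hv) _.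
  rewrite (@join_ext P _ (fun _ => 0)); first exact: rrefl.
  move=> j hj; rewrite /r /sc /eps; splitif; try lia; ring.
set j1 := (P - m.+1)%N.
have sE : supp P (eps j1) by apply: supp_eps; lia.
have pE : prim P (eps j1) by apply: (@prim_unit _ _ j1); [lia | rewrite /eps eqxx mulr1].
have hd1 : deltaE P q = deltaE P (eps j1) by rewrite hd delta_eps; lia.
have r1 := lift hv (reach_sc 2 (hPd _ _ sq sE pq pE hd1)).
set q' := fun j => eps j1 j + (if j == P.-1 then v else 0).
have r2 : reach P.+2 (join P (sc 2 (eps j1)) 0 v) (join P (sc 2 q') 0 (-v)).
  have -> : sc 2 q' = (fun j => sc 2 (eps j1) j + (if j == P.-1 then 2 * v else 0)).
    apply: functional_extensionality => j; rewrite /sc /q'; splitif; ring.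
  exact: inv.
have sq' : supp P q' by move=> j hj; rewrite /q' /eps; splitif; lia.
have pq' : prim P q' by apply: (@prim_unit _ _ j1); [lia | rewrite /q' /eps; splitif; lia].
have hd' : deltaE P q' = (P.+1 - m.*2)%N.
  rewrite (@delta_m2 _ q' (vadd (eps j1) (eps P.-1))); last first.
    move=> j hj; rewrite /q' /vadd !parD; congr (_ (+) _).
    rewrite /eps; splitif => //; lia.
  rewrite delta_eps2; lia.
have hm1 : (1 <= m)%N by lia.
have hm2 : (m.*2 <= P)%N by lia.
have hv' : (-v) * (-v) = 1 by rewrite mulrNN.
have [w [hw r3]] := IH q' (-v) sq' pq' hd' hm1 hm2 hv'.
exists w; split => //.
apply: reach_trans r1 (reach_trans r2 r3).
Qed.


Lemma to_c1 P w : ~~ odd P -> w * w = 1 ->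
  reach P.+2 (join P (fun _ => 0) 0 w) (c P.+2 1).
Proof.
move=> hev hw.
have -> : c P.+2 1 = eps P.+1.
  by apply: functional_extensionality => j; rewrite /c /= add0r.
have -> : join P (fun _ => 0) 0 w = sc w (eps P.+1).
  apply: functional_extensionality => j; rewrite /join /sc /eps; splitif; try lia; ring.
case: (unit_cases hw) => ->.
  have -> : sc 1 (eps P.+1) = eps P.+1 by apply: functional_extensionality => j; rewrite /sc mul1r.
  exact: rrefl.
apply: reach_sym; apply: (@sign_flip P.+2) => //; lia.
Qed.

Lemma step P : ~~ odd P -> ((0 < P)%N -> R P) -> R P.+2.
Proof.
move=> hev IHR e hs hp.
have hL2 : (1 < P.+2)%N by lia.
have [e1 [r1 hu]] := @phase1 P.+2 e hL2 hp.
set u := e1 P.+1 in hu.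
have hs1 := reach_supp r1 hs.
have hp1 := reach_prim r1 hp.
have he1 : e1 = join P e1 (e1 P) u.
  apply: functional_extensionality => j; rewrite /join /u; splitif; try lia.
  - by rewrite (_ : j = P) //; lia.
  - by rewrite (_ : j = P.+1) //; lia.
  - rewrite hs1 //; lia.
have r2 : reach P.+2 e1 (join P e1 0 u) by rewrite {1}he1; apply: kill.
have r12 := reach_trans r1 r2.
case: (boolP [forall j : 'I_P, e1 j == 0]) => hz.
  exists 1%N; split => //; split; first lia.
  apply: reach_trans r12 _.
  rewrite (@join_ext P _ (fun _ => 0)); first exact: to_c1.
  by move=> j hj; move/forallP: hz => /(_ (Ordinal hj)) /eqP.
have hP : (0 < P)%N.
  case: (posnP P) => [hP0|//]; move: hz; apply: contraNT => _.
  apply/forallP => j; have := ltn_ord j; lia.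
have hPd : Pd P by apply: R_to_P; exact: IHR.
set g := \big[gcdz/0]_(j < P) e1 j.
have hgj : forall j, (j < P)%N -> (g %| e1 j)%Z.
  by move=> j hj; apply: (@bgcd_dvd P (fun j : 'I_P => e1 j) (Ordinal hj)).
have hg0 : 0 <= g by apply: bgcd_ge0.
have hg : g != 0.
  apply/eqP => hg; move/negP: hz; apply; apply/forallP => j.
  by move: (hgj j (ltn_ord j)); rewrite hg dvd0z.
set ph : vec := fun j => if (j < P)%N then divz (e1 j) g else 0.
have hph : forall j, (j < P)%N -> g * ph j = e1 j.
  by move=> j hj; rewrite /ph hj mulrC divzK //; apply: hgj.
have sph : supp P ph by move=> j hj; rewrite /ph ifF //; lia.
have pph : prim P ph.
  move=> d hd.
  have : (d * g %| g)%Z.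
    apply: (@dvd_bgcd P (fun j : 'I_P => e1 j)) => j.
    rewrite -hph //; rewrite mulrC; apply: dvdz_mul => //; exact: hd.
  by move=> h; rewrite -(dvdz_mul2r hg) mul1r.
have [m' [hm1 [hm2 rp]]] := IHR hP ph sph pph.
set j0 := m'.-1.
have sE : supp P (eps j0) by apply: supp_eps; lia.
have pE : prim P (eps j0) by apply: (@prim_unit _ _ j0); [lia | rewrite /eps eqxx mulr1].
have rp2 : reach P ph (eps j0).
  apply: reach_trans rp _; apply: hPd => //.
  - exact: c_supp.
  - by apply: (@prim_unit _ _ P.-1); [lia | rewrite c_unit // mulr1].
  - rewrite delta_c // delta_eps; lia.
have r3 := lift hu (reach_sc g rp2).
have r3' : reach P.+2 (join P e1 0 u) (join P (sc g (eps j0)) 0 u).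
  by rewrite (@join_ext P e1 (sc g ph)); [exact: r3 | move=> j hj; rewrite /sc hph].
have r4 := reach_trans r12 (reach_trans r3' (inv (sc g (eps j0)) hP hu)).
set q1 := fun j => _ in r4.
have pu := par_unit hu.
case: (boolP (par g)) => hgp.
  have sq1 : supp P q1 by move=> j hj; rewrite /q1 /sc /eps; splitif; try lia; ring.
  have pq1 : prim P q1.
    move=> d hd.
    have hj0 : (j0 < P)%N by lia.
    have hP1 : (P.-1 < P)%N by lia.
    have hdg : (d %| g)%Z by move: (hd j0 hj0); rewrite /q1 /sc /eps; splitif; try lia; rewrite mulr1 addr0.
    have hd2 : (d %| 2)%Z.
      have := hd P.-1 hP1; rewrite /q1 /sc /eps; splitif; try lia; rewrite mulr0 add0r.
      by move=> h; have := dvdz_mulr u h; rewrite -mulrA hu mulr1.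
    rewrite dvdz1; move: hd2; rewrite dvdzE => hd2.
    have := @dvdn_leq _ 2 isT hd2 => hle.
    move: hdg hgp; rewrite /par dvdzE => hdg hgp.
    have [h0|[h1|h2]] : (`|d| = 0 \/ `|d| = 1 \/ `|d| = 2)%N by lia.
    - by move: hd2; rewrite h0.
    - by rewrite h1.
    - move: hdg; rewrite h2 => hdg; exfalso; move: hgp; lia.
  have hdq1 : deltaE P q1 = deltaE P (eps j0).
    apply: delta_m2 => j hj; rewrite /q1 /sc parD parM hgp /=.
    rewrite /eps; splitif => //; by rewrite parM (_ : par 2 = false) // andFb addbF.
  have hj0' : (j0 < P.-1)%N by lia.
  have hnu : (- u) * (- u) = 1 by rewrite mulrNN.
  have r5 := lemF hP hPd sq1 pq1 hdq1 hj0' hnu.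
  exists m'.+1; split => //; split; first by rewrite doubleS; lia.
  apply: reach_trans r4 (reach_trans r5 _).
  have -> : c P.+2 m'.+1 = join P (eps j0) 0 1.
    apply: functional_extensionality => j; rewrite /c /join /eps /j0; splitif; try lia; ring.
  exact: rrefl.
set q2 : vec := fun j => sc (divz g 2) (eps j0) j + (if j == P.-1 then u else 0).
have hq : q1 = sc 2 q2.
  apply: functional_extensionality => j; rewrite /q1 /q2 /sc.
  have hg2 : g = 2 * divz g 2 by move: hgp; rewrite /par; lia.
  splitif; try lia; rewrite {1}hg2; ring.
rewrite hq in r4.
have sq2 : supp P q2 by move=> j hj; rewrite /q2 /sc /eps; splitif; try lia; ring.
have pq2 : prim P q2.
  apply: (@prim_unit _ _ P.-1); first lia.
  by rewrite /q2 /sc /eps; splitif; try lia; rewrite mulr0 add0r.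
have [m2 [hm21 [hm22 rq2]]] := IHR hP q2 sq2 pq2.
have hd2 : deltaE P q2 = (P.+1 - m2.*2)%N by rewrite -(reach_delta rq2) delta_c.
have hnu : (- u) * (- u) = 1 by rewrite mulrNN.
have [w [hw r5]] := lemE hP hPd sq2 pq2 hd2 hm21 hm22 hnu.
exists 1%N; split => //; split; first lia.
apply: reach_trans r4 (reach_trans r5 _).
exact: to_c1.
Qed.

Lemma R_all s : (1 <= s)%N -> R s.*2.
Proof.
elim: s => [//|s IH] _; rewrite doubleS; apply: step; first by rewrite odd_double.
move=> hP; apply: IH; lia.
Qed.


Section Mat.
Variable n : nat.

Definition kv (k : 'cV[int]_n) (j : nat) : int :=
  if insub j is Some o then k o 0 else 0.

Lemma kv_ord k (o : 'I_n) : kv k o = k o 0.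
Proof. by rewrite /kv valK. Qed.

Lemma kv_out k j : (n <= j)%N -> kv k j = 0.
Proof. by move=> h; rewrite /kv insubF //; apply/negbTE; rewrite -leqNgt. Qed.

Definition Ev (k : 'cV[int]_n) : vec :=
  fun j => if (j < n)%N then (if j is j'.+1 then kv k j' else 0) - kv k j else 0.

Definition Kv (e : vec) : 'cV[int]_n := \col_(a < n) - Sm a e.

Lemma Sm_Ev k a : (a < n)%N -> Sm a (Ev k) = - kv k a.
Proof.
elim: a => [|a IH] ha; first by rewrite S0 /Ev ha add0r.
rewrite SS IH; last lia. rewrite /Ev ha /=; ring.
Qed.

Lemma Kv_Ev k : Kv (Ev k) = k.
Proof.
apply/matrixP => a b; rewrite ord1 mxE Sm_Ev ?ltn_ord // opprK kv_ord; done.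
Qed.

Lemma Ev_supp k : supp n (Ev k).
Proof. by move=> j hj; rewrite /Ev ifF //; lia. Qed.

Lemma sum2 (G F : 'I_n -> int) p q (al be : int) : (p < n)%N -> (q < n)%N ->
  (forall b : 'I_n, G b = (if (b : nat) == p then al else 0) + (if (b : nat) == q then be else 0)) ->
  \sum_b G b = al + be.
Proof.
move=> hp hq h; rewrite (eq_bigr _ (fun b _ => h b)) big_split /=.
by rewrite !sum_ifc.
Qed.

Definition sgx (i a b : nat) : int :=
  if i == 0%N then (if a == 0%N then bi (b == a) else bi (b == a) + bi (b == 0%N))
  else if a == i.-1 then 2 * bi (b == i.-1) - bi (b == i)
  else if a == i then bi (b == i.-1) else bi (b == a).

Lemma natr_bi (x : bool) : (x%:R : int) = bi x.
Proof. by case: x. Qed.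

Lemma sigmaE (i a b : 'I_n) : sigma i a b = sgx i a b.
Proof.
rewrite /sigma mxE /sgx -!val_eqE /= !natr_bi.
done.
Qed.

Lemma sum_lin (F : nat -> int) p q (al be : int) : (p < n)%N -> (q < n)%N ->
  \sum_(j < n) (al * bi ((j : nat) == p) + be * bi ((j : nat) == q)) * F j = al * F p + be * F q.
Proof.
move=> hp hq.
rewrite (eq_bigr (fun j : 'I_n => (if (j : nat) == p then al * F j else 0) +
                                   (if (j : nat) == q then be * F j else 0))); last first.
  by move=> j _; rewrite /bi; case: ((j : nat) == p); case: ((j : nat) == q); ring.
by rewrite big_split /= (sum_if (fun j => al * F j)) // (sum_if (fun j => be * F j)).
Qed.

Lemma sigma_K (i : 'I_n) e : sigma i *m Kv e = Kv (tau n i 1 e).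
Proof.
apply/matrixP => a z; rewrite ord1 !mxE S_tau // mul1r.
rewrite (eq_bigr (fun j : 'I_n => sgx i a j * - Sm j e)); last first.
  by move=> j _; rewrite sigmaE mxE.
case: i => i hi; case: a => a ha /=.
set F := fun j => - Sm j e.
have hS : forall j, Sm j.+1 e = Sm j e + e j.+1 by move=> j; rewrite SS.
case: i hi => [|i] hi.
- have [a0|an0] := eqVneq a 0%N.
  + subst a. rewrite (eq_bigr (fun j : 'I_n => (1 * bi ((j : nat) == 0%N) + 0 * bi ((j : nat) == 0%N)) * F j)).
      rewrite sum_lin // /F /bi /=; ring.
    by move=> j _; rewrite /sgx /F /=; ring.
  + rewrite (eq_bigr (fun j : 'I_n => (1 * bi ((j : nat) == a) + 1 * bi ((j : nat) == 0%N)) * F j)).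
      rewrite sum_lin // /F S0 /bi /=; rewrite ifT; last lia. ring.
    by move=> j _; rewrite /sgx /F /= (negbTE an0); ring.
- have hi' : (i < n)%N by lia.
  have [a1|an1] := eqVneq a i.
    subst a. rewrite (eq_bigr (fun j : 'I_n => (2 * bi ((j : nat) == i) + (-1) * bi ((j : nat) == i.+1)) * F j)).
      rewrite sum_lin // /F hS /bi /=. rewrite ifF; last lia. rewrite ifT; last lia. ring.
    by move=> j _; rewrite /sgx /F /= eqxx; ring.
  have [a2|an2] := eqVneq a i.+1.
    subst a. rewrite (eq_bigr (fun j : 'I_n => (1 * bi ((j : nat) == i) + 0 * bi ((j : nat) == i)) * F j)).
      rewrite sum_lin // /F hS /bi /=. rewrite ifF; last lia. rewrite ifT; last lia. ring.
    by move=> j _; rewrite /sgx /F /= eqxx (_ : (i.+1 == i) = false) //; [ring | lia].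
  rewrite (eq_bigr (fun j : 'I_n => (1 * bi ((j : nat) == a) + 0 * bi ((j : nat) == a)) * F j)).
    rewrite sum_lin // /F /bi.
    have -> : (i.+1 < a)%N = (0 < i.+1 <= a.+1)%N by apply/idP/idP; lia.
    ring.
  by move=> j _; rewrite /sgx /F /= (negbTE an1) (negbTE an2); ring.
Qed.

Lemma sigma_unit (i : 'I_n) : sigma i \in unitmx.
Proof.
set M : 'M[int]_n := \matrix_(a, b) Kv (tau n i (-1) (Ev (col b 1%:M))) a 0.
suff h : sigma i *m M = 1%:M by case: (mulmx1_unit h).
apply/matrixP => a b.
have hcol : col b M = Kv (tau n i (-1) (Ev (col b 1%:M))).
  by apply/matrixP => c d; rewrite ord1 !mxE.
have -> : (sigma i *m M) a b = (sigma i *m col b M) a 0.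
  by rewrite !mxE; apply: eq_bigr => c _; rewrite !mxE.
by rewrite hcol sigma_K tau_add addrN tau0 Kv_Ev mxE.
Qed.

Lemma invK (i : 'I_n) e : invmx (sigma i) *m Kv e = Kv (tau n i (-1) e).
Proof.
have h := sigma_K i (tau n i (-1) e).
rewrite tau_add addrN tau0 in h.
by rewrite -h mulmxA mulVmx ?mul1mx // sigma_unit.
Qed.

Lemma tau_mat (i : 'I_n) (t : int) : exists h, inG h /\ forall e, Kv (tau n i t e) = h *m Kv e.
Proof.
case: t => m.
  elim: m => [|m [h [hh IH]]].
    by exists 1%:M; split; [exact: inG_one | move=> e; rewrite tau0 mul1mx].
  exists (sigma i *m h); split; first by apply: inG_mul => //; exact: inG_gen.
  move=> e; rewrite -mulmxA -IH sigma_K tau_add; congr (Kv (tau _ _ _ _)); lia.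
elim: m => [|m [h [hh IH]]].
  exists (invmx (sigma i)); split; first exact: inG_inv.
  by move=> e; rewrite invK.
exists (invmx (sigma i) *m h); split; first by apply: inG_mul => //; exact: inG_inv.
move=> e; rewrite -mulmxA -IH invK tau_add; congr (Kv (tau _ _ _ _)); lia.
Qed.

Lemma reach_orbit e e' : reach n e e' -> same_orbit (Kv e) (Kv e').
Proof.
elim=> [x|x i t x' hi _ [g hg hx']].
  by exists 1%:M; [exact: inG_one | rewrite mul1mx].
have [h [hh Hh]] := tau_mat (Ordinal hi) t.
exists (g *m h); first exact: inG_mul.
by rewrite hx' Hh mulmxA.
Qed.

Lemma Sm_dv d e a : dv n d e -> (a < n)%N -> (d %| Sm a e)%Z.
Proof.
move=> hd; elim: a => [|a IH] ha; first by rewrite S0; apply: hd.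
rewrite SS; apply: dvD; [apply: IH; lia | apply: hd; lia].
Qed.

Lemma dvK e d : dv n d e <-> (forall a : 'I_n, (d %| Kv e a ord0)%Z).
Proof.
split=> [hd a | h j hj]; first by rewrite mxE; apply: dvN; apply: Sm_dv.
have hS : forall a, (a < n)%N -> (d %| Sm a e)%Z.
  by move=> a ha; move: (h (Ordinal ha)); rewrite mxE => /dvN; rewrite opprK.
case: j hj => [|j] hj; first by rewrite -S0; apply: hS.
have -> : e j.+1 = Sm j.+1 e - Sm j e by rewrite SS; ring.
by apply: dvD; [apply: hS | apply: dvN; apply: hS; lia].
Qed.

Lemma dvz_anti x y : 0 <= x -> 0 <= y -> (x %| y)%Z -> (y %| x)%Z -> x = y.
Proof.
move=> hx hy; rewrite !dvdzE => h1 h2.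
case: (posnP `|y|%N) => hy0.
  by move: h2; rewrite hy0 dvd0n => /eqP hx0; lia.
case: (posnP `|x|%N) => hx0.
  by move: h1; rewrite hx0 dvd0n => /eqP hy1; lia.
have := dvdn_leq hy0 h1; have := dvdn_leq hx0 h2; lia.
Qed.

Lemma gK_dvd e a : (gammaK (Kv e) %| Kv e a ord0)%Z.
Proof. exact: (@bgcd_dvd n (fun j => Kv e j ord0) a). Qed.

Lemma dv_gK e : dv n (gammaK (Kv e)) e.
Proof. by apply/dvK => a; apply: gK_dvd. Qed.

Lemma gamma_eq e e' : (forall d, dv n d e -> dv n d e') -> (forall d, dv n d e' -> dv n d e) ->
  gammaK (Kv e) = gammaK (Kv e').
Proof.
move=> h1 h2; apply: dvz_anti; try exact: bgcd_ge0.
- apply: (@dvd_bgcd n (fun j => Kv e' j ord0)) => a.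
  by move: a; apply/dvK; apply: h1; apply: dv_gK.
- apply: (@dvd_bgcd n (fun j => Kv e j ord0)) => a.
  by move: a; apply/dvK; apply: h2; apply: dv_gK.
Qed.

Definition divv (e : vec) (g : int) : vec := fun j => divz (e j) g.

Lemma card_sum (P : pred 'I_n) : #|[set j | P j]| = (\sum_(j < n) (P j : nat))%N.
Proof. by rewrite -sum1dep_card big_mkcond /=; apply: eq_bigr => j _; case: (P j). Qed.

Lemma sum_sgb_nat (f : nat -> bool) m :
  \sum_(j < m) sgb (f j) = 2 * Posz (\sum_(j < m) (f j : nat)) - m%:Z.
Proof.
elim: m => [|m IH]; first by rewrite !big_ord0.
rewrite !big_ord_recr /= IH /sgb; case: (f m) => /=; lia.
Qed.

Lemma divzDd (g x y : int) : g != 0 -> (g %| x)%Z -> (g %| y)%Z -> divz (x + y) g = divz x g + divz y g.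
Proof. by move=> hg /dvdzP [a ->] /dvdzP [b ->]; rewrite -mulrDl !mulzK. Qed.

Lemma divz_lin (g x y c : int) : g != 0 -> (g %| x)%Z -> (g %| y)%Z ->
  divz (x + c * y) g = divz x g + c * divz y g.
Proof.
move=> hg /dvdzP [a ->] /dvdzP [b ->].
by rewrite mulrA -mulrDl !mulzK.
Qed.

Lemma Sm_divv e g a : g != 0 -> dv n g e -> (a < n)%N -> Sm a e = Sm a (divv e g) * g.
Proof.
move=> hg hd ha; rewrite /Sm /divv mulr_suml; apply: eq_bigr => j _.
by rewrite divzK //; apply: hd; case: j => j /=; lia.
Qed.

Lemma deltaK_Kv e : gammaK (Kv e) != 0 -> deltaK (Kv e) = deltaE n (divv e (gammaK (Kv e))).
Proof.
set g := gammaK (Kv e) => hg.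
have hd : dv n g e by apply: dv_gK.
rewrite /deltaK /alphaK card_sum -/g /deltaE /psi (sum_sgb_nat (fun j => par (Sm j (divv e g)))).
have -> : (\sum_(j < n) (modz (divz (Kv e j ord0) g) 2 == 1 : nat))%N =
          (\sum_(j < n) (par (Sm j (divv e g)) : nat))%N.
  apply: eq_bigr => j _; rewrite mxE (Sm_divv hg hd) ?ltn_ord // -mulNr mulzK //.
  by rewrite -/(par _) parN.
lia.
Qed.

Lemma deltaK_0 e : gammaK (Kv e) = 0 -> deltaK (Kv e) = n.+1.
Proof.
move=> hg; rewrite /deltaK /alphaK card_sum hg big1 //; first lia.
by move=> j _; rewrite divz0 mod0z.
Qed.

Lemma inv_tau (i : 'I_n) e : gammaK (Kv (tau n i 1 e)) = gammaK (Kv e) /\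
  deltaK (Kv (tau n i 1 e)) = deltaK (Kv e).
Proof.
have hi := ltn_ord i.
have hg : gammaK (Kv (tau n i 1 e)) = gammaK (Kv e).
  apply: gamma_eq => d hd; first by rewrite -(tauK n i 1 e); apply: tau_dv.
  exact: tau_dv.
split => //.
have [h0|hn0] := eqVneq (gammaK (Kv e)) 0.
  by rewrite !deltaK_0 // hg.
rewrite !deltaK_Kv ?hg //.
set g := gammaK (Kv e).
have hd : dv n g e by apply: dv_gK.
rewrite (@delta_ext n _ (tau n i 1 (divv e g))); first exact: psi_tau.
move=> j hj; rewrite /divv /tau.
case: ifP => _.
  have -> : e j - 1 * e i = e j + (-1) * e i by ring.
  rewrite divz_lin //; [ring | exact: hd | exact: hd].
case: ifP => h2.
  rewrite divz_lin //; [exact: hd | apply: hd; lia].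
done.
Qed.

Lemma inv_sigma (i : 'I_n) k : gammaK (sigma i *m k) = gammaK k /\ deltaK (sigma i *m k) = deltaK k.
Proof.
rewrite -{1 2 3 4}(Kv_Ev k) sigma_K; exact: inv_tau.
Qed.

Lemma inv_G g : inG g -> forall k : 'cV[int]_n, gammaK (g *m k) = gammaK k /\ deltaK (g *m k) = deltaK k.
Proof.
elim=> [|i|i|g1 g2 _ IH1 _ IH2] k.
- by rewrite mul1mx.
- exact: inv_sigma.
- have := inv_sigma i (invmx (sigma i) *m k).
  by rewrite mulmxA mulmxV ?sigma_unit // mul1mx => -[-> ->].
- by rewrite -mulmxA; case: (IH1 (g2 *m k)) => -> ->; apply: IH2.
Qed.

Lemma prim_div e : supp n e -> gammaK (Kv e) != 0 ->
  let g := gammaK (Kv e) in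
  let eh : vec := fun j => if (j < n)%N then divz (e j) g else 0 in
  [/\ supp n eh, prim n eh & sc g eh = e].
Proof.
move=> hs hg g eh.
have hd : dv n g e by apply: dv_gK.
split.
- by move=> j hj; rewrite /eh ifF //; lia.
- move=> d hdd.
  have h2 : dv n (d * g) e.
    move=> j hj; have := hdd j hj; rewrite /eh hj => h.
    by rewrite -(divzK (hd j hj)); apply: dvdz_mul.
  have : (d * g %| g)%Z.
    apply: (@dvd_bgcd n (fun j => Kv e j ord0)) => a.
    by move: a; apply/dvK.
  by move=> h; rewrite -(dvdz_mul2r hg) mul1r.
- apply: functional_extensionality => j; rewrite /sc /eh.
  case: ifP => hj; first by rewrite mulrC divzK //; apply: hd.
  by rewrite mulr0 hs //; lia.
Qed.

Lemma gamma_sc f g j0 : (j0 < n)%N -> f j0 = 1 -> 0 <= g -> gammaK (Kv (sc g f)) = g.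
Proof.
move=> hj0 hf hg; apply: dvz_anti => //; first exact: bgcd_ge0.
- have := dv_gK (sc g f) hj0; by rewrite /sc hf mulr1.
- apply: (@dvd_bgcd n (fun j => Kv (sc g f) j ord0)) => a.
  move: a; apply/dvK => j hj; rewrite /sc; exact: dvdz_mulr.
Qed.

Lemma gamma_pos (k : 'cV[int]_n) : k != 0 -> 0 < gammaK k.
Proof.
move=> hk; have := @bgcd_ge0 n (fun j => k j ord0); rewrite -/(gammaK k) le_eqVlt.
case/orP => [/eqP h|//]; exfalso; move/eqP: hk; apply.
apply/matrixP => a b; rewrite ord1 mxE.
have := @bgcd_dvd n (fun j => k j ord0) a; rewrite -/(gammaK k) -h dvd0z.
by move/eqP.
Qed.

End Mat.


Lemma part1 (s : nat) (k : 'cV[int]_(s.*2)) : k != 0 ->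
  0 < gammaK k /\ odd (deltaK k) /\ (deltaK k < s.*2)%N.
Proof.
move=> hk; set n := s.*2 in k hk *.
have hg := gamma_pos hk; split => //.
set g := gammaK k in hg *.
have hdg : forall a : 'I_n, (g %| k a ord0)%Z by move=> a; exact: (@bgcd_dvd n (fun j => k j ord0) a).
have hal : (alphaK k <= n)%N by rewrite /alphaK; apply: leq_trans (max_card _) _; rewrite card_ord.
have ha1 : (0 < alphaK k)%N.
  rewrite /alphaK -/g; apply/card_gt0P; apply: NNPP => hne.
  have h2 : forall a : 'I_n, (2 * g %| k a ord0)%Z.
    move=> a; have hm : modz (divz (k a ord0) g) 2 != 1.
      by apply/negP => hm; apply: hne; exists a; rewrite inE.
    have [q hq] : exists q, divz (k a ord0) g = q * 2 by exists (divz (divz (k a ord0) g) 2); lia.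
    apply/dvdzP; exists q; rewrite -(divzK (hdg a)) hq; ring.
  have := @dvd_bgcd n (fun j => k j ord0) (2 * g) h2; rewrite -/(gammaK k) -/g dvdzE => h.
  have hg0 : (0 < `|g|)%N by lia.
  have := dvdn_leq hg0 h; lia.
set al := alphaK k in hal ha1.
rewrite /deltaK -/al.
set r := if (s < al)%N then (al - s - 1)%N else (s - al)%N.
have -> : `|((2 * al)%:Z - (n.+1)%:Z)|%N = r.*2.+1.
  rewrite /r /n; case: ifP => h; rewrite -!muln2; lia.
split; first by rewrite /= odd_double.
rewrite /r /n; case: ifP => h; rewrite -!muln2; lia.
Qed.

Lemma orbit_inv n (k k' : 'cV[int]_n) : same_orbit k k' -> gammaK k = gammaK k' /\ deltaK k = deltaK k'.
Proof. by case=> g hg ->; case: (inv_G hg k) => -> ->. Qed.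

Lemma reduce (s : nat) (k : 'cV[int]_(s.*2)) : (1 <= s)%N -> k != 0 ->
  exists m, (1 <= m)%N /\ (m.*2 <= s.*2)%N /\
    reach s.*2 (Ev k) (sc (gammaK k) (c s.*2 m)).
Proof.
move=> hs hk; set n := s.*2 in k hk *.
have hg := gamma_pos hk.
have hk' : gammaK (Kv n (Ev k)) != 0 by rewrite Kv_Ev; lia.
have [sh ph eh] := @prim_div n (Ev k) (Ev_supp k) hk'.
rewrite Kv_Ev in eh sh ph.
have [m [hm1 [hm2 r]]] := R_all hs sh ph.
exists m; split => //; split => //.
have := reach_sc (gammaK k) r; by rewrite eh.
Qed.

Lemma delta_canon (s : nat) (k : 'cV[int]_(s.*2)) m : (1 <= s)%N -> k != 0 ->
  (1 <= m)%N -> (m.*2 <= s.*2)%N ->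
  reach s.*2 (Ev k) (sc (gammaK k) (c s.*2 m)) -> deltaK k = (s.*2.+1 - m.*2)%N.
Proof.
move=> hs hk hm1 hm2 r.
set n := s.*2 in k hk hm2 r *.
have hg := gamma_pos hk.
case: (orbit_inv (reach_orbit r)); rewrite Kv_Ev => hgam ->.
have hj : (n.-1 < n)%N by rewrite /n; lia.
have hgc : gammaK (Kv n (sc (gammaK k) (c n m))) = gammaK k.
  by apply: (gamma_sc hj); [rewrite c_unit | lia].
rewrite deltaK_Kv; last by rewrite hgc; lia.
rewrite hgc (@delta_ext n _ (c n m)); first by rewrite delta_c.
move=> j hj'; rewrite /divv /sc mulrC mulzK //; lia.
Qed.

Unset Implicit Arguments.

Theorem mainTheorem5 (s : nat) (hs : (1 <= s)%N) :
  (* the invariants take values in Z_{>0} x {1,3,...,2s-1} *)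
  (forall k : 'cV[int]_(s.*2), k != 0 ->
     0 < gammaK k /\ odd (deltaK k) /\ (deltaK k < s.*2)%N) /\
  (* (gamma, delta) is constant on orbits and separates orbits *)
  (forall k k' : 'cV[int]_(s.*2), k != 0 -> k' != 0 ->
     (same_orbit k k' <-> gammaK k = gammaK k' /\ deltaK k = deltaK k')) /\
  (* every admissible pair is attained *)
  (forall (g : int) (d : nat), 0 < g -> odd d -> (d < s.*2)%N ->
     exists k : 'cV[int]_(s.*2), k != 0 /\ gammaK k = g /\ deltaK k = d).
Proof.
split; first exact: part1.
split.
  move=> k k' hk hk'; split; first exact: orbit_inv.
  case=> hgam hdel.
  have [m [hm1 [hm2 r]]] := reduce hs hk.
  have [m' [hm1' [hm2' r']]] := reduce hs hk'.
  have d1 := delta_canon hs hk hm1 hm2 r.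
  have d2 := delta_canon hs hk' hm1' hm2' r'.
  have hmm : m = m' by lia.
  subst m'; rewrite -hgam in r'.
  have := reach_orbit (reach_trans r (reach_sym r')).
  by rewrite !Kv_Ev.
move=> g d hg hd hds.
set n := s.*2.
set r := d./2.
have hdr : d = r.*2.+1 by have := odd_double_half d; rewrite hd /r; lia.
set m := (s - r)%N.
have hm1 : (1 <= m)%N by rewrite /m; move: hds; rewrite hdr -!muln2; lia.
have hm2 : (m.*2 <= n)%N by rewrite /m /n -!muln2; lia.
have hj : (n.-1 < n)%N by rewrite /n; lia.
set k : 'cV[int]_n := Kv n (sc g (c n m)).
have hgk : gammaK k = g.
  by apply: (gamma_sc hj); [rewrite c_unit | lia].
exists k; split; last split => //.
  apply/eqP => hk0; move: hgk; rewrite hk0.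
  have -> : gammaK (0 : 'cV[int]_n) = 0.
    rewrite /gammaK bgcdE big1 // => j _; by rewrite mxE.
  lia.
rewrite /k deltaK_Kv; last by rewrite -/k hgk; lia.
rewrite -/k hgk (@delta_ext n _ (c n m)); first rewrite delta_c //.
  rewrite /m /n hdr -!muln2; lia.
move=> j hj'; rewrite /divv /sc mulrC mulzK //; lia.
Qed.
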